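(* Let $m,n\ge1$ be integers, $A=(a_{ij})$ an $n\times m$ real matrix and $q_{\max}>1$. The ILLL-algorithm on input $A,q_{\max}$ finds a sequence of $m$-tuples of integers $q_1,\dots,q_m$ such that for every real $Q$ with $2^{\frac{(m+n+3)(m+n)}{4m}}\le Q\le q_{\max}$ one of these $m$-tuples satisfies $$\max_j|q_j|\le Q\quad\text{and}\quad \max_i\|q_1a_{i1}+\dots+q_ma_{im}\|\le 2^{\frac{(m+n+3)(m+n)}{4n}}Q^{-\frac{m}{n}}.$$
   Context: $\|x\|$ denotes the distance from $x\in\mathbb R$ to the nearest integer. A basis $b_1,\dots,b_r$ of $\mathbb R^r$ with Gram–Schmidt vectors $b_i^*=b_i-\sum_{j<i}\mu_{ij}b_j^*$, $\mu_{ij}=(b_i,b_j^* )/(b_j^*,b_j^* )$, is reduced if $|\mu_{ij}|\le\frac12$ ($j<i$) and $|b_i^*+\mu_{i,i-1}b_{i-1}^*|^2\ge\frac34|b_{i-1}^*|^2$ ($1<i\le r$); the LLL-algorithm returns a reduced basis of the lattice generated by its input basis. The ILLL-algorithm: put $k'=\left\lceil -\frac{(m+n-1)(m+n)}{4n}+\frac{m\log_2 q_{\max}}{n}\right\rceil$ and, for $k\ge1$, $c(k)=\left(2^{-\frac{m+n+3}{4}-k+1}\right)^{\frac{m+n}{m}}$. Start with the basis given by the columns of $B=\begin{pmatrix} I_n & A\\ 0& c(1)I_m\end{pmatrix}$. In iteration $k=1,\dots,k'$: apply the LLL-algorithm to the current basis; from the first vector of the reduced basis, which has the form $(q_1a_{11}+\dots+q_ma_{1m}-p_1,\dots,q_1a_{n1}+\dots+q_ma_{nm}-p_n,c(k)q_1,\dots,c(k)q_m)^T$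 with $p_i,q_j\in\mathbb Z$, output the $m$-tuple $q(k)=(q_1,\dots,q_m)$; then divide the last $m$ coordinates of all basis vectors by $2^{\frac{m+n}{m}}$. The sequence found by the algorithm is $q(1),\dots,q(k')$. *)

(* Defs.v *)
From mathcomp Require Import all_boot all_order all_algebra.
From mathcomp Require Import reals exp.
Set Implicit Arguments. Unset Strict Implicit. Unset Printing Implicit Defensive.
Import Order.TTheory GRing.Theory Num.Theory.
Local Open Scope ring_scope.

Section ILLL.
Variable R : realType.

Definition dotc (N : nat) (u v : 'cV[R]_N) : R := \sum_(k < N) u k 0 * v k 0.

Definition bcols (N : nat) (M : 'M[R]_N) : seq 'cV[R]_N :=
  [seq col j M | j <- enum 'I_N].

(* Gram-Schmidt: b_i^* = b_i - sum_{j<i} mu_ij b_j^*,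
   mu_ij = (b_i,b_j^* )/(b_j^*,b_j^* ) *)
Fixpoint gs_aux (N : nat) (acc s : seq 'cV[R]_N) : seq 'cV[R]_N :=
  match s with
  | [::] => acc
  | v :: s' =>
      gs_aux (rcons acc (v - \sum_(w <- acc) (dotc v w / dotc w w) *: w)) s'
  end.

Definition bvec (N : nat) (M : 'M[R]_N) (i : nat) : 'cV[R]_N := nth 0 (bcols M) i.
Definition bstar (N : nat) (M : 'M[R]_N) (i : nat) : 'cV[R]_N :=
  nth 0 (gs_aux [::] (bcols M)) i.
Definition gs_mu (N : nat) (M : 'M[R]_N) (i j : nat) : R :=
  dotc (bvec M i) (bstar M j) / dotc (bstar M j) (bstar M j).

(* reduced basis (0-indexed) *)
Definition reduced (N : nat) (M : 'M[R]_N) : Prop :=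
  (forall i j : nat, (j < i < N)%N -> `|gs_mu M i j| <= 1/2) /\
  (forall i : nat, (0 < i < N)%N ->
     let w := bstar M i + gs_mu M i i.-1 *: bstar M i.-1 in
     dotc w w >= 3/4 * dotc (bstar M i.-1) (bstar M i.-1)).

Definition in_lattice (N : nat) (M : 'M[R]_N) (v : 'cV[R]_N) : Prop :=
  exists z : 'I_N -> int, v = \sum_(j < N) (z j)%:~R *: col j M.

Definition LLL_spec (N : nat) (LLL : 'M[R]_N -> 'M[R]_N) : Prop :=
  forall M : 'M[R]_N, M \in unitmx ->
    (forall v, in_lattice (LLL M) v <-> in_lattice M v) /\ reduced (LLL M).

Definition dnint (x : R) : R :=
  Num.min (x - (Num.floor x)%:~R) ((Num.floor x + 1)%:~R - x).

Definition illl_c (n m k : nat) : R :=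
  powR (powR 2 (- ((m + n + 3)%:R / 4) - k%:R + 1)) ((m + n)%:R / m%:R).

Definition illl_kprime (n m : nat) (qmax : R) : int :=
  Num.ceil (- (((m + n - 1) * (m + n))%:R / (4 * n)%:R)
            + m%:R * (ln qmax / ln 2) / n%:R).

Definition illl_B0 (n m : nat) (A : 'M[R]_(n, m)) : 'M[R]_(n + m) :=
  block_mx 1%:M A 0 (illl_c n m 1 *: 1%:M).

Definition illl_D (n m : nat) : 'M[R]_(n + m) :=
  block_mx 1%:M 0 0 ((powR 2 ((m + n)%:R / m%:R))^-1 *: 1%:M).

(* illl_basis k = the basis at the start of iteration k+1 *)
Fixpoint illl_basis (n m : nat) (LLL : 'M[R]_(n + m) -> 'M[R]_(n + m))
  (A : 'M[R]_(n, m)) (k : nat) : 'M[R]_(n + m) :=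
  match k with
  | 0 => illl_B0 A
  | k'.+1 => illl_D n m *m LLL (illl_basis LLL A k')
  end.

(* q(k) for k >= 1: last m coordinates of the first reduced vector, divided by c(k) *)
Definition illl_q (n m : nat) (LLL : 'M[R]_(n + m) -> 'M[R]_(n + m))
  (A : 'M[R]_(n, m)) (k : nat) (j : 'I_m) : R :=
  bvec (LLL (illl_basis LLL A k.-1)) 0 (rshift n j) 0 / illl_c n m k.

End ILLL.

(* Main.v *)
Require Import Defs.
From mathcomp Require Import all_boot all_order all_algebra.
From mathcomp Require Import reals exp.
From mathcomp Require Import ring lra.
Set Implicit Arguments. Unset Strict Implicit. Unset Printing Implicit Defensive.
Import Order.TTheory GRing.Theory Num.Theory.
Local Open Scope ring_scope.

Section GS.
Variable R : realType.

Lemma dotcC N (u v : 'cV[R]_N) : dotc u v = dotc v u.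
Proof. by rewrite /dotc; apply: eq_bigr => k _; rewrite mulrC. Qed.

Lemma dotcDl N (u v w : 'cV[R]_N) : dotc (u + v) w = dotc u w + dotc v w.
Proof. by rewrite /dotc -big_split; apply: eq_bigr => k _; rewrite mxE mulrDl. Qed.

Lemma dotcNl N (u w : 'cV[R]_N) : dotc (- u) w = - dotc u w.
Proof. by rewrite /dotc -sumrN; apply: eq_bigr => k _; rewrite mxE mulNr. Qed.

Lemma dotcBl N (u v w : 'cV[R]_N) : dotc (u - v) w = dotc u w - dotc v w.
Proof. by rewrite dotcDl dotcNl. Qed.

Lemma dotcZl N a (u w : 'cV[R]_N) : dotc (a *: u) w = a * dotc u w.
Proof. by rewrite /dotc mulr_sumr; apply: eq_bigr => k _; rewrite mxE mulrA. Qed.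

Lemma dotcDr N (u v w : 'cV[R]_N) : dotc w (u + v) = dotc w u + dotc w v.
Proof. by rewrite dotcC dotcDl !(dotcC w). Qed.

Lemma dotcZr N a (u w : 'cV[R]_N) : dotc w (a *: u) = a * dotc w u.
Proof. by rewrite dotcC dotcZl dotcC. Qed.

Lemma dotc_suml N I (r : seq I) (P : pred I) (F : I -> 'cV[R]_N) w :
  dotc (\sum_(i <- r | P i) F i) w = \sum_(i <- r | P i) dotc (F i) w.
Proof.
rewrite /dotc; under eq_bigr => k _ do rewrite summxE mulr_suml.
by rewrite exchange_big.
Qed.

Lemma dotc_ge0 N (u : 'cV[R]_N) : 0 <= dotc u u.
Proof. by rewrite /dotc sumr_ge0 // => k _; rewrite -expr2 sqr_ge0. Qed.

Lemma dotc_eq0 N (u : 'cV[R]_N) : dotc u u = 0 -> u = 0.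
Proof.
move=> /eqP; rewrite /dotc psumr_eq0 => [H|k _]; last by rewrite -expr2 sqr_ge0.
apply/matrixP => i j; rewrite (ord1 j) mxE.
by move/allP: H => /(_ i (mem_index_enum _)) /implyP /(_ isT); rewrite mulf_eq0 orbb => /eqP.
Qed.

Lemma dotc0r N (u : 'cV[R]_N) : dotc u 0 = 0.
Proof. by rewrite /dotc big1 // => k _; rewrite mxE mulr0. Qed.

Lemma coord_sq N (u : 'cV[R]_N) i : u i 0 ^+ 2 <= dotc u u.
Proof.
rewrite /dotc (bigD1 i) //= -expr2 lerDl sumr_ge0 // => k _.
by rewrite -expr2 sqr_ge0.
Qed.

Lemma gs_aux_spec N (acc s : seq 'cV[R]_N) :
  [/\ size (gs_aux acc s) = (size acc + size s)%N,
      take (size acc) (gs_aux acc s) = acc &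
      forall i, (i < size s)%N -> nth 0 (gs_aux acc s) (size acc + i) =
        nth 0 s i - \sum_(w <- take (size acc + i) (gs_aux acc s))
                     (dotc (nth 0 s i) w / dotc w w) *: w].
Proof.
elim: s acc => [|v s IH] acc /=.
  by split => //; [rewrite addn0 | rewrite take_size].
set v' := v - _.
have [H1 H2 H3] := IH (rcons acc v'); rewrite size_rcons in H1 H2 H3.
have H2' : take (size acc) (gs_aux (rcons acc v') s) = acc.
  by rewrite -(take_takel _ (leqnSn (size acc))) H2 -cats1 take_size_cat.
split => //; first by rewrite H1 addSnnS.
case=> [|i] Hi.
  rewrite addn0 -(nth_take _ (ltnSn (size acc))) H2 nth_rcons ltnn eqxx H2'.
  by [].
by rewrite -addSnnS H3.
Qed.

Lemma size_bcols N (M : 'M[R]_N) : size (bcols M) = N.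
Proof. by rewrite /bcols size_map size_enum_ord. Qed.

Lemma bvec_col N (M : 'M[R]_N) (i : 'I_N) : bvec M i = col i M.
Proof.
rewrite /bvec /bcols (nth_map i); last by rewrite size_enum_ord.
by rewrite nth_ord_enum.
Qed.

Lemma bstar_eq N (M : 'M[R]_N) i : (i < N)%N ->
  bstar M i = bvec M i - \sum_(l < i) gs_mu M i l *: bstar M l.
Proof.
move=> Hi.
have [H1 _ H3] := gs_aux_spec [::] (bcols M).
rewrite size_bcols /= in H1 H3.
rewrite /bstar (H3 _ Hi) /=; congr (_ - _).
rewrite (big_nth 0) size_takel; last by rewrite H1 ltnW.
rewrite big_mkord; apply: eq_bigr => l _.
by rewrite nth_take.
Qed.

Lemma bstar_orth N (M : 'M[R]_N) i j : (i < N)%N -> (j < i)%N ->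
  dotc (bstar M i) (bstar M j) = 0.
Proof.
elim/ltn_ind: i j => i IH j HiN Hji.
have Horth : forall l, (l < i)%N -> l != j -> dotc (bstar M l) (bstar M j) = 0.
  move=> l Hl Hlj; case: (ltngtP l j) Hlj => // Hlj' _.
    by rewrite dotcC; apply: IH => //; apply: ltn_trans HiN.
  by apply: IH => //; apply: ltn_trans HiN.
rewrite (bstar_eq M HiN) dotcBl dotc_suml.
rewrite (bigD1 (Ordinal Hji)) //=.
rewrite [X in _ - (_ + X)]big1; last first.
  by move=> l Hl; rewrite dotcZl Horth ?mulr0.
rewrite addr0 dotcZl /gs_mu.
have [H0|H0] := eqVneq (dotc (bstar M j) (bstar M j)) 0.
  by rewrite (dotc_eq0 H0) !dotc0r; ring.
by rewrite mulfVK // subrr.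
Qed.

Lemma bstar0 N (M : 'M[R]_N) : (0 < N)%N -> bstar M 0 = bvec M 0.
Proof. by move=> H; rewrite bstar_eq // big_ord0 subr0. Qed.

End GS.

Section Det.
Variable R : realType.

Lemma col_decomp N (M : 'M[R]_N) (i : 'I_N) :
  col i M = bstar M i + \sum_(l < i) gs_mu M i l *: bstar M l.
Proof. by rewrite (bstar_eq M (ltn_ord i)) bvec_col subrK. Qed.

Lemma det_gs N (M : 'M[R]_N) :
  \det M ^+ 2 = \prod_(i < N) dotc (bstar M i) (bstar M i).
Proof.
pose Bs : 'M[R]_N := \matrix_(r, i) bstar M i r 0.
pose U : 'M[R]_N := \matrix_(j, i) (if (j < i)%N then gs_mu M i j else (j == i)%:R).
have HM : M = Bs *m U.
  apply/matrixP => r i; rewrite !mxE.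
  have -> : M r i = col i M r 0 by rewrite mxE.
  rewrite col_decomp mxE summxE.
  rewrite (bigID (fun j : 'I_N => (j < i)%N)) /=.
  have E1 : \sum_(j < N | ~~ (j < i)%N) Bs r j * U j i = bstar M i r 0.
    rewrite (bigD1 i) ?ltnn //= /Bs /U !mxE ltnn eqxx mulr1 big1 ?addr0 //.
    move=> j /andP [Hj1 Hj2]; rewrite !mxE (negbTE Hj1).
    by rewrite (negbTE Hj2) mulr0.
  have E2 : \sum_(j < N | (j < i)%N) Bs r j * U j i =
            \sum_(k < i) (gs_mu M i k *: bstar M k) r 0.
    rewrite (big_ord_widen N (fun l => (gs_mu M i l *: bstar M l) r 0)); last exact: ltnW.
    apply: eq_bigr => j Hj; rewrite /Bs /U !mxE Hj.
    by rewrite mulrC.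
  by rewrite E1 E2 addrC.
have HU : \det U = 1.
  rewrite -det_tr det_trig; last first.
    apply/is_trig_mxP => a b Hab; rewrite !mxE ltnNge ltnW //=.
    by case: eqP Hab => // ->; rewrite ltnn.
  by rewrite big1 // => k _; rewrite !mxE ltnn eqxx.
have HB : Bs^T *m Bs = diag_mx (\row_i dotc (bstar M i) (bstar M i)).
  apply/matrixP => a b; rewrite !mxE.
  have -> : \sum_j Bs^T a j * Bs j b = dotc (bstar M a) (bstar M b).
    by apply: eq_bigr => r _; rewrite !mxE.
  case: (ltngtP a b) => Hab.
  - rewrite dotcC bstar_orth //.
    by case: eqP Hab => // ->; rewrite ltnn.
  - rewrite bstar_orth //.
    by case: eqP Hab => // ->; rewrite ltnn.
  - have E : a = b by apply: val_inj.
    by rewrite E eqxx mulr1n.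
rewrite {1}HM det_mulmx HU mulr1.
have := congr1 determinant HB.
by rewrite det_mulmx det_tr det_diag expr2 => ->; apply: eq_bigr => i _; rewrite mxE.
Qed.

Lemma lovasz N (M : 'M[R]_N) i : reduced M -> (0 < i < N)%N ->
  dotc (bstar M i.-1) (bstar M i.-1) <= 2 * dotc (bstar M i) (bstar M i).
Proof.
move=> [Hmu Hlov] Hi.
have := Hlov i Hi; set mu := gs_mu M i i.-1.
have Hi1 : (i.-1 < i)%N by case/andP: Hi => H _; rewrite ltn_predL.
have HiN : (i < N)%N by case/andP: Hi.
have Hm := Hmu i i.-1 (introT andP (conj Hi1 HiN)).
move=> /=; rewrite dotcDl !dotcDr !dotcZl !dotcZr (dotcC (bstar M i.-1) (bstar M i)).
rewrite (@bstar_orth R N M i i.-1 HiN Hi1) !mulr0 !addr0.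
have := dotc_ge0 (bstar M i.-1); have := dotc_ge0 (bstar M i).
set X := dotc (bstar M i.-1) _; set Y := dotc (bstar M i) _.
move=> HY HX.
have Hm2 : mu * mu <= 1/4.
  rewrite -expr2 -real_normK ?num_real //; have := normr_ge0 mu.
  rewrite /mu; move: Hm; set a := `|_|; move=> Ha Ha0; nra.
move=> H.
have H4 : mu * (mu * X) <= 1/4 * X by rewrite mulrA ler_wpM2r.
lra.
Qed.

Lemma lovasz_chain N (M : 'M[R]_N) i : reduced M -> (i < N)%N ->
  dotc (bstar M 0) (bstar M 0) <= 2 ^+ i * dotc (bstar M i) (bstar M i).
Proof.
move=> Hred; elim: i => [|i IH] Hi; first by rewrite expr0 mul1r.
have := lovasz Hred (_ : (0 < i.+1 < N)%N); rewrite /= => /(_ Hi) H.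
apply: le_trans (IH (ltnW Hi)) _.
by rewrite exprSr -mulrA ler_pM2l ?exprn_gt0.
Qed.

Lemma lll_bound N (M : 'M[R]_N) : reduced M -> (0 < N)%N ->
  dotc (bvec M 0) (bvec M 0) ^+ N <= 2 ^+ 'C(N, 2) * \det M ^+ 2.
Proof.
move=> Hred HN; rewrite -bstar0 // det_gs.
have -> : dotc (bstar M 0) (bstar M 0) ^+ N = \prod_(i < N) dotc (bstar M 0) (bstar M 0).
  by rewrite prodr_const card_ord.
have -> : (2 : R) ^+ 'C(N, 2) = \prod_(i < N) 2 ^+ i.
  by rewrite prodrXr -bin2_sum big_mkord.
rewrite -big_split /=; apply: ler_prod => i _.
by rewrite dotc_ge0 lovasz_chain.
Qed.

End Det.

Section Lat.
Variable R : realType.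

Definition imx N (z : 'cV[int]_N) : 'cV[R]_N := map_mx (fun x : int => x%:~R) z.

Lemma in_latticeP N (M : 'M[R]_N) v :
  in_lattice M v <-> exists z : 'cV[int]_N, v = M *m imx z.
Proof.
split.
  move=> [z ->]; exists (\col_j z j); apply/matrixP => r c.
  rewrite (ord1 c) !mxE summxE; apply: eq_bigr => j _.
  by rewrite !mxE mulrC.
move=> [z ->]; exists (fun j => z j 0); apply/matrixP => r c.
rewrite (ord1 c) !mxE summxE; apply: eq_bigr => j _.
by rewrite !mxE mulrC.
Qed.

Lemma LLL_props N (LLL : 'M[R]_N -> 'M[R]_N) M : LLL_spec LLL -> M \in unitmx ->
  [/\ LLL M \in unitmx, `|\det (LLL M)| <= `|\det M|,
      (forall v, in_lattice (LLL M) v -> in_lattice M v) & reduced (LLL M)].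
Proof.
move=> Hs HM; have [Hl Hr] := Hs M HM.
have Hc : forall j : 'I_N, exists z : 'cV[int]_N, col j M = LLL M *m imx z.
  move=> j; apply/in_latticeP/Hl/in_latticeP.
  exists (\col_i (i == j)%:Z); apply/matrixP => r c.
  rewrite (ord1 c) !mxE (bigD1 j) //= big1 ?addr0 => [|i Hi].
    by rewrite !mxE eqxx mulr1.
  by rewrite !mxE (negbTE Hi) mulr0.
have [f Hf] := fin_all_exists Hc.
pose Z : 'M[int]_N := \matrix_(i, j) f j i 0.
have EZ : M = LLL M *m map_mx (fun x : int => x%:~R) Z.
  apply/matrixP => r j; have := congr1 (fun A : 'cV[R]_N => A r 0) (Hf j).
  by rewrite !mxE => ->; apply: eq_bigr => k _; rewrite !mxE.
have Hdet : \det M = \det (LLL M) * (\det Z)%:~R.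
  by rewrite {1}EZ det_mulmx (det_map_mx (intr : {rmorphism int -> R})).
have HdM : \det M != 0 by move: HM; rewrite unitmxE unitfE.
have HZ : \det Z != 0.
  by apply: contra HdM => /eqP H; rewrite Hdet H mulr0.
split => //.
- rewrite unitmxE unitfE; apply: contra HdM => /eqP H.
  by rewrite Hdet H mul0r.
- rewrite Hdet normrM ler_peMr // -intr_norm.
  rewrite (_ : 1 = 1%:~R) // ler_int.
  by rewrite -gtz0_ge1 normr_gt0.
- by move=> v /Hl.
Qed.

End Lat.
Arguments imx {R N} z.

Section Iter.
Variable R : realType.

Definition dD (n m : nat) : R := (powR 2 ((m + n)%:R / m%:R))^-1.

Lemma dD_gt0 n m : 0 < dD n m.
Proof. by rewrite /dD invr_gt0 powR_gt0. Qed.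

Lemma c_gt0 n m k : 0 < illl_c R n m k.
Proof. by rewrite /illl_c powR_gt0 // powR_gt0. Qed.

Lemma basis_props n m (LLL : 'M[R]_(n + m) -> 'M[R]_(n + m)) (A : 'M[R]_(n, m)) :
  LLL_spec LLL -> forall k,
  [/\ illl_basis LLL A k \in unitmx,
      `|\det (illl_basis LLL A k)| <= illl_c R n m 1 ^+ m * (dD n m ^+ m) ^+ k &
      forall v, in_lattice (illl_basis LLL A k) v -> exists zp zq,
        v = col_mx (imx zp + A *m imx zq) ((dD n m ^+ k * illl_c R n m 1) *: imx zq)].
Proof.
move=> Hs; have c1 := c_gt0 n m 1; have d0 := dD_gt0 n m.
elim=> [|k [IHu IHd IHl]] /=.
  have Hdet : \det (illl_B0 A) = illl_c R n m 1 ^+ m.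
    by rewrite /illl_B0 det_ublock det1 scalemx1 det_scalar mul1r.
  split.
  - by rewrite unitmxE unitfE Hdet expf_neq0 // gt_eqF.
  - by rewrite Hdet expr0 mulr1 ger0_norm // exprn_ge0 // ltW.
  move=> v /in_latticeP [z ->]; exists (usubmx z), (dsubmx z).
  rewrite -{1}(vsubmxK z) /imx map_col_mx /illl_B0 mul_block_col.
  by rewrite mul1mx mul0mx add0r scalemx1 mul_scalar_mx expr0 mul1r.
have [Lu Ld Ll Lr] := LLL_props Hs IHu.
have HdD : \det (illl_D R n m) = dD n m ^+ m.
  by rewrite /illl_D det_ublock det1 scalemx1 det_scalar mul1r.
split.
- rewrite unitmxE unitfE det_mulmx HdD mulf_neq0 //; first by rewrite expf_neq0 // gt_eqF.
  by move: Lu; rewrite unitmxE unitfE.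
- rewrite det_mulmx HdD normrM (ger0_norm (exprn_ge0 _ (ltW d0))) exprS.
  rewrite mulrCA; apply: ler_pM => //; first by rewrite exprn_ge0 // ltW.
  exact: le_trans Ld IHd.
move=> v /in_latticeP [z ->].
have [zp [zq E]] := IHl _ (Ll _ (proj2 (in_latticeP _ _) (ex_intro _ z erefl))).
exists zp, zq; rewrite -mulmxA E /illl_D mul_block_col.
rewrite mul1mx !mul0mx addr0 add0r scalemx1 mul_scalar_mx scalerA.
rewrite -[(2 `^ _)^-1]/(dD n m).
by rewrite exprS mulrA.
Qed.

End Iter.
Arguments dD {R} n m.
Arguments c_gt0 {R} n m k. Arguments dD_gt0 {R} n m.

Section Main.
Variable R : realType.

Lemma p2D (x y : R) : powR 2 (x + y) = powR 2 x * powR 2 y.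
Proof. by rewrite powRD // pnatr_eq0 implybT. Qed.

Lemma p2X (x : R) j : powR 2 x ^+ j = powR 2 (j%:R * x).
Proof. by rewrite -powR_mulrn ?powR_ge0 // -powRrM mulrC. Qed.

Lemma cE n m j : illl_c R n m j =
  powR 2 ((- ((m + n + 3)%:R / 4) - j%:R + 1) * ((m + n)%:R / m%:R)).
Proof. by rewrite /illl_c -powRrM. Qed.

Lemma dDE n m : dD (R:=R) n m = powR 2 (- ((m + n)%:R / m%:R)).
Proof. by rewrite /dD powRN. Qed.

Lemma cS n m j : illl_c R n m j.+1 = dD n m ^+ j * illl_c R n m 1.
Proof.
rewrite !cE dDE p2X -p2D; congr (powR 2 _).
rewrite -addn1 natrD; ring.
Qed.

Lemma binR N : ('C(N, 2)%:R : R) = N%:R * (N%:R - 1) / 2.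
Proof.
elim: N => [|N IH]; first by rewrite bin0n mul0r mul0r.
rewrite binS bin1 natrD IH -addn1 natrD; field.
all: by [].
Qed.

Lemma first_vec n m (LLL : 'M[R]_(n + m) -> 'M[R]_(n + m)) (A : 'M[R]_(n, m)) j :
  (0 < m)%N -> LLL_spec LLL ->
  exists (zp : 'cV[int]_n) (zq : 'cV[int]_m), [/\ forall j', illl_q LLL A j.+1 j' = (zq j' 0)%:~R,
    forall j', illl_c R n m j.+1 * `|(zq j' 0)%:~R| <= powR 2 (- (j.+1)%:R) &
    forall i, `|(zp i 0)%:~R + \sum_j' A i j' * (zq j' 0)%:~R| <= powR 2 (- (j.+1)%:R)].
Proof.
move=> Hm Hs.
have [Bu Bd Bl] := basis_props A Hs j.
set L := LLL (illl_basis LLL A j).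
have [Lu Ld Ll Lr] := LLL_props Hs Bu.
have HN : (0 < n + m)%N by rewrite addn_gt0 Hm orbT.
set i0 : 'I_(n + m) := Ordinal HN.
set b := bvec L 0.
have Hb : b = col i0 L by rewrite /b -bvec_col.
have [zp [zq Ez]] : exists zp zq, b = col_mx (imx zp + A *m imx zq)
        ((dD n m ^+ j * illl_c R n m 1) *: imx zq).
  apply: Bl; apply: Ll; apply/in_latticeP.
  exists (\col_i (i == i0)%:Z); rewrite Hb; apply/matrixP => r c.
  rewrite (ord1 c) !mxE (bigD1 i0) //= big1 ?addr0 => [|i Hi].
    by rewrite !mxE eqxx mulr1.
  by rewrite !mxE (negbTE Hi) mulr0.
have Hbb : dotc b b <= powR 2 (- (j.+1)%:R) ^+ 2.
  have H1 := lll_bound Lr HN.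
  have H2 : \det L ^+ 2 <= (illl_c R n m j.+1 ^+ m) ^+ 2.
    rewrite -(real_normK (num_real (\det L))).
    rewrite ler_pXn2r ?nnegrE ?normr_ge0 //; last exact: exprn_ge0 (ltW (c_gt0 _ _ _)).
    apply: le_trans Ld (le_trans Bd _); rewrite (cS n m j) exprMn -!exprM mulnC mulrC.
    by [].
  have H3 : dotc b b ^+ (n + m) <= (powR 2 (- (j.+1)%:R) ^+ 2) ^+ (n + m).
    apply: le_trans H1 _; apply: le_trans (ler_wpM2l _ H2) _.
      by rewrite exprn_ge0.
    have E2 : (2 : R) ^+ 'C(n + m, 2) = powR 2 ('C(n + m, 2))%:R by rewrite powR_mulrn.
    rewrite -!exprM cE !p2X E2 -p2D.
    rewrite le_eqVlt; apply/orP; left; apply/eqP.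
    congr (powR 2 _); rewrite binR.
    have Hm0 : (m%:R : R) != 0 by rewrite pnatr_eq0 -lt0n.
    rewrite !natrM !natrD -addn1 natrD; field => //.
  by move: H3; rewrite ler_pXn2r ?nnegrE ?dotc_ge0 ?exprn_ge0 ?powR_ge0.
have Hco : forall i, `|b i 0| <= powR 2 (- (j.+1)%:R).
  move=> i; rewrite -(ler_pXn2r (_ : (0 < 2)%N)) ?nnegrE ?normr_ge0 ?powR_ge0 //.
  by rewrite real_normK ?num_real //; apply: le_trans (coord_sq _ _) Hbb.
have Hc := @c_gt0 R n m j.+1.
exists zp, zq; split.
- move=> j'; rewrite /illl_q /= -/L -/b Ez col_mxEd !mxE -cS mulrC mulKf //.
  by rewrite (gt_eqF Hc).
- move=> j'; have := Hco (rshift n j'); rewrite Ez col_mxEd !mxE -cS normrM.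
  by rewrite (gtr0_norm Hc).
- move=> i; have := Hco (lshift m i); rewrite Ez col_mxEu !mxE.
  set s1 := \sum_j _; set s2 := \sum_j _.
  suff -> : s1 = s2 by [].
  by apply: eq_bigr => j' _; rewrite !mxE.
Qed.

End Main.

Section Final.
Variable R : realType.

Lemma dnint_le (x : R) (z : int) : dnint x <= `|x - z%:~R|.
Proof.
rewrite /dnint; set f := Num.floor x.
have h1 : f%:~R <= x := floor_le x.
have h2 : x < (f + 1)%:~R by rewrite -floor_lt_int ltzD1.
have h3 := ler_norm (x - z%:~R); have h4 := ler_norm (z%:~R - x).
rewrite distrC in h4.
case: (lerP z f) => Hz.
  have Hz' : (z%:~R : R) <= f%:~R by rewrite ler_int.
  rewrite ge_min; apply/orP; left; lra.
have H : (1 : int) <= z - f by rewrite -gtz0_ge1 subr_gt0.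
have Hz' : (1 : R) <= z%:~R - f%:~R by rewrite -intrB (_ : (1:R) = 1%:~R) // ler_int.
rewrite intrD in h2 *.
rewrite ge_min; apply/orP; right; lra.
Qed.

Lemma p2_le (a b : R) : (powR 2 a <= powR 2 b) = (a <= b).
Proof.
have l2 : 0 < ln (2 : R) by rewrite ln_gt0 // ltr1n.
have Ha : powR 2 a \in Num.pos by rewrite posrE powR_gt0.
have Hb : powR 2 b \in Num.pos by rewrite posrE powR_gt0.
by rewrite -(ler_ln Ha Hb) !ln_powR ler_pM2r.
Qed.

Lemma p2_ln (Q : R) : 0 < Q -> powR 2 (ln Q / ln 2) = Q.
Proof.
move=> HQ; have l2 : 0 < ln (2 : R) by rewrite ln_gt0 // ltr1n.
rewrite /powR pnatr_eq0 /= divfK ?gt_eqF //.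
by rewrite lnK // posrE.
Qed.

End Final.

Unset Implicit Arguments.

Theorem theorem2 (R : realType) (m n : nat) (A : 'M[R]_(n, m)) (qmax : R)
  (LLL : 'M[R]_(n + m) -> 'M[R]_(n + m)) :
  (1 <= m)%N -> (1 <= n)%N -> 1 < qmax -> LLL_spec LLL ->
  (forall k : nat, (1 <= k)%N -> (k%:Z <= illl_kprime n m qmax)%R ->
     forall j : 'I_m, exists z : int, illl_q LLL A k j = z%:~R) /\
  (forall Q : R,
     powR 2 (((m + n + 3) * (m + n))%:R / (4 * m)%:R) <= Q -> Q <= qmax ->
     exists k : nat, [/\ (1 <= k)%N, (k%:Z <= illl_kprime n m qmax)%R &
       exists q : 'I_m -> int,
         [/\ forall j, illl_q LLL A k j = (q j)%:~R,
             forall j, `|(q j)%:~R : R| <= Q &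
             forall i : 'I_n,
               dnint (\sum_(j < m) (q j)%:~R * A i j)
                 <= powR 2 (((m + n + 3) * (m + n))%:R / (4 * n)%:R)
                    * powR Q (- (m%:R / n%:R))]]).
Proof.
move=> Hm Hn Hq Hs; split.
  move=> [//|j] _ _ j'.
  have [zp [zq [H1 _ _]]] := first_vec A j Hm Hs.
  by exists (zq j' 0).
move=> Q HQ1 HQ2.
have Hm0 : (m%:R : R) != 0 by rewrite pnatr_eq0 -lt0n.
have Hn0 : (n%:R : R) != 0 by rewrite pnatr_eq0 -lt0n.
have Hmp : (0 : R) < m%:R by rewrite ltr0n.
have Hnp : (0 : R) < n%:R by rewrite ltr0n.
have l2 : 0 < ln (2:R) by rewrite ln_gt0 // ltr1n.
have HQ0 : 0 < Q by apply: lt_le_trans HQ1; exact: powR_gt0.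
set t := ln Q / ln 2.
have Qt : Q = powR 2 t by rewrite p2_ln.
have Ht0 : ((m + n + 3) * (m + n))%:R / (4 * m)%:R <= t by rewrite -p2_le -Qt.
set L := ln qmax / ln 2.
have HtL : t <= L by rewrite -p2_le -Qt p2_ln // (lt_trans ltr01 Hq).
set y := m%:R / n%:R * (t + 1) - ((m + n + 3) * (m + n))%:R / (4 * n)%:R.
have Hy0 : 0 <= y.
  have -> : y = m%:R / n%:R * (t - ((m + n + 3) * (m + n))%:R / (4 * m)%:R)
               + m%:R / n%:R.
    by rewrite /y !natrM !natrD; field; rewrite ?Hn0 ?Hm0.
  apply: addr_ge0; last by rewrite divr_ge0 // ltW.
  by apply: mulr_ge0; [rewrite divr_ge0 // ltW | rewrite subr_ge0].
set f := Num.floor y.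
have Hf0 : 0 <= f by rewrite floor_ge0.
set j := `|f|%N.
have Hj : (j%:R : R) = f%:~R by rewrite natr_absz ger0_norm.
have Hfy : f%:~R <= y := floor_le y.
have Hyf : y < f%:~R + 1.
  by rewrite -[1]/(1%:~R) -intrD -floor_lt_int ltzD1.
rewrite -Hj in Hfy Hyf.
have [zp [zq [H1 H2 H3]]] := first_vec A j Hm Hs.
exists j.+1; split => //.
  rewrite /illl_kprime -(ler_int R); apply: le_trans (ceil_ge _).
  set X := _ + _.
  have -> : X = y + 1 + m%:R / n%:R * (L - t).
    rewrite /X /y -/L !natrM natrB ?addn_gt0 ?Hm // !natrD.
    by field; rewrite ?Hn0 ?Hm0.
  have : 0 <= m%:R / n%:R * (L - t).
    by apply: mulr_ge0; [rewrite divr_ge0 // ltW | rewrite subr_ge0].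
  rewrite -pmulrn -addn1 natrD; lra.
exists (fun j' => zq j' 0); split => //.
- move=> j'; have := H2 j'.
  have Hc := @c_gt0 R n m j.+1.
  move=> Hb; rewrite -(ler_pM2l Hc); apply: le_trans Hb _.
  rewrite Qt cE -p2D p2_le.
  have : 0 <= n%:R / m%:R * (y - j%:R).
    by apply: mulr_ge0; [rewrite divr_ge0 // ltW | rewrite subr_ge0].
  set e := _ + t.
  have -> : e = - (j.+1)%:R + n%:R / m%:R * (y - j%:R).
    rewrite /e /y !natrM !natrD -addn1 natrD.
    by field; rewrite ?Hn0 ?Hm0.
  lra.
- move=> i; apply: le_trans (dnint_le _ (- zp i 0)) _.
  have := H3 i.
  have -> : \sum_(j0 < m) (zq j0 0)%:~R * A i j0 - (- zp i 0)%:~R =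
            (zp i 0)%:~R + \sum_j' A i j' * (zq j' 0)%:~R.
    rewrite intrN opprK addrC; congr (_ + _).
    by apply: eq_bigr => j' _; rewrite mulrC.
  move=> Hb; apply: le_trans Hb _.
  rewrite Qt -powRrM -p2D p2_le.
  set e := _ + _.
  have -> : e = - (j.+1)%:R + ((j%:R + 1 - y) + m%:R / n%:R).
    rewrite /e /y !natrM !natrD -addn1 natrD.
    by field; rewrite ?Hn0 ?Hm0.
  have : (0 : R) <= m%:R / n%:R by exact: divr_ge0 (ltW Hmp) (ltW Hnp).
  lra.
Qed.
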